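(* Let $E$ be a real topological vector space, $\Omega$ a nonempty open subset of $E$, and $f_0,\dots,f_m:\Omega\to\mathbb{R}$ functions. Let $\hat{x}$ be a solution of the problem $$(\mathcal{Q}_1)\qquad \min f_0(x)\quad\text{subject to } x\in\Omega,\ f_i(x)\le0\ \text{for all } i\in\{1,\dots,m\}.$$ Assume: (a) for every $j\in\{i\in\{1,\dots,m\}:f_i(\hat{x})<0\}$, $f_j$ is upper semicontinuous at $\hat{x}$; (b) for every $i\in\{0,\dots,m\}$, $f_i$ is $D^+_M$-differentiable at $\hat{x}$. Then there exist $\lambda^0,\dots,\lambda^m\in\mathbb{R}_+$ such that: (i) $(\lambda^0,\dots,\lambda^m)\neq(0,\dots,0)$; (ii) $\lambda^if_i(\hat{x})=0$ for all $i\in\{1,\dots,m\}$; (iii) $\sum_{i=0}^m\lambda^iD^+_Mf_i(\hat{x})(u)\ge0$ for all $u\in E$. If, in addition, (c) there exists $w\in E$ such that $D^+_Mf_i(\hat{x})(w)<0$ for every $i\in\{1,\dots,m\}$ with $f_i(\hat{x})=0$, then one can take $\lambda^0=1$.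
   Context: For a function $f$ defined on an open set containing $x$ and $u\in E$, the upper Dini derivative is $D^+f(x)(u):=\limsup_{t\to0^+}\frac{f(x+tu)-f(x)}{t}$, with the convention $D^+f(x)(0)=0$. The modified upper Dini derivative is $D^+_Mf(x)(u):=\sup_{w\in E}\{D^+f(x)(u+w)-D^+f(x)(w)\}$. The function $f$ is $D^+_M$-differentiable at $x$ if $D^+_Mf(x)(u)$ and $D^+f(x)(u)$ are finite for every $u\in E$. *)

(* Defs.v *)
From HB Require Import structures.
From mathcomp Require Import all_boot all_order all_algebra.
From mathcomp Require Import all_classical all_reals all_analysis.
Set Implicit Arguments. Unset Strict Implicit. Unset Printing Implicit Defensive.
Import Order.TTheory GRing.Theory Num.Theory.
Import numFieldTopology.Exports.
Local Open Scope classical_set_scope.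
Local Open Scope ring_scope.

Section Dini.
Variables (R : realType) (E : topologicalLmodType R).

Definition dini_up (f : E -> R) (x u : E) : \bar R :=
  if u == 0 then 0%E
  else limf_esup (fun t : R => ((f (x + t *: u) - f x) / t)%:E) (0%R)^'+.

Definition dini_upM (f : E -> R) (x u : E) : \bar R :=
  ereal_sup [set (dini_up f x (u + w)%R - dini_up f x w)%E | w in [set: E]].

Definition dini_upM_differentiable (f : E -> R) (x : E) : Prop :=
  forall u : E, dini_upM f x u \is a fin_num /\ dini_up f x u \is a fin_num.

Definition usc_at (f : E -> R) (x : E) : Prop :=
  forall e : R, 0 < e -> \forall y \near x, f y < f x + e.

End Dini.

(* Main.v *)
Require Import Defs.
From HB Require Import structures.
From mathcomp Require Import all_boot all_order all_algebra.
From mathcomp Require Import all_classical all_reals all_analysis.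
From mathcomp Require Import ring lra.
Import Order.TTheory GRing.Theory Num.Theory.
Import numFieldTopology.Exports.
Local Open Scope classical_set_scope.
Local Open Scope ring_scope.
Lemma sum_ind (R : realType) N (e : 'I_N) (a : R) :
  \sum_(i < N) (if i == e then a else 0) = a.
Proof. by rewrite (bigD1 e) //= eqxx big1 ?addr0 // => i /negPf ->. Qed.

Lemma hb_fin (R : realType) (N : nat) (P : ('I_N -> R) -> R) :
  (forall y z, P (fun i => y i + z i) <= P y + P z) ->
  (forall c y, 0 < c -> P (fun i => c * y i) = c * P y) ->
  0 <= P (fun => 0) ->
  exists lam : 'I_N -> R, forall y, \sum_i lam i * y i <= P y.
Proof.
move=> Psub Phom P0.
suff H : forall k, exists lam : 'I_N -> R, forall y,
    (forall i : 'I_N, (k <= i)%N -> y i = 0) -> \sum_i lam i * y i <= P y.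
  by have [lam Hl] := H N; exists lam => y; apply: Hl => i; rewrite leqNgt ltn_ord.
elim=> [|k [lam IH]].
  exists (fun=> 0) => y Hy; have -> : y = (fun=> 0) by apply/funext => i; exact: Hy.
  by rewrite big1 // => i _; rewrite mul0r.
have [hk|hk] := ltnP k N; last first.
  by exists lam => y Hy; apply: IH => i ki; have := leq_trans hk ki; rewrite leqNgt ltn_ord.
pose e : 'I_N := Ordinal hk.
pose l (y : 'I_N -> R) := \sum_i lam i * y i.
pose Z := [set z : 'I_N -> R | forall i : 'I_N, (k <= i)%N -> z i = 0].
pose ev := fun i : 'I_N => if i == e then 1 else 0 : R.
have lD y z : l (fun i => y i + z i) = l y + l z.
  by rewrite /l -big_split /=; apply: eq_bigr => i _; rewrite mulrDr.
have lZ a y : l (fun i => a * y i) = a * l y.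
  by rewrite /l mulr_sumr; apply: eq_bigr => i _; rewrite mulrCA.
have key z z' : Z z -> Z z' ->
    l z - P (fun i => z i - ev i) <= P (fun i => z' i + ev i) - l z'.
  move=> Zz Zz'; rewrite lerBrDr addrAC lerBlDr.
  have -> : l z + l z' = l (fun i => z i + z' i) by rewrite lD.
  apply: (le_trans (IH _ _)); first by move=> i ki; rewrite Zz ?Zz' ?addr0.
  have -> : (fun i => z i + z' i) = (fun i => (z i - ev i) + (z' i + ev i)).
    by apply/funext => i; ring.
  rewrite [X in _ <= X]addrC; exact: (Psub (fun i => z i - ev i) (fun i => z' i + ev i)).
pose S := [set l z - P (fun i => z i - ev i) | z in Z].
have Sne : S !=set0.
  by exists (l (fun=> 0) - P (fun i => 0 - ev i)); exists (fun=> 0).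
have Sub z' : Z z' -> ubound S (P (fun i => z' i + ev i) - l z').
  by move=> Zz' _ [z Zz <-]; exact: key.
have Z0 : Z (fun=> 0) by [].
have ZZ a z : Z z -> Z (fun i => a * z i) by move=> Zz i ki; rewrite Zz ?mulr0.
have hS : has_ubound S by exists (P (fun i => 0 + ev i) - l (fun=> 0)); exact: Sub.
pose c := sup S.
have cle z' : Z z' -> c <= P (fun i => z' i + ev i) - l z'.
  by move=> Zz'; apply: ge_sup => //; exact: Sub.
have gec z : Z z -> l z - P (fun i => z i - ev i) <= c.
  by move=> Zz; apply: ub_le_sup => //; exists z.
exists (fun i => if i == e then c else lam i) => y Hy.
pose s := y e.
pose y' := fun i => if i == e then 0 else y i.
have Zy' : Z y'.
  move=> i ki; rewrite /y'; case: eqP => // /eqP ie; apply: Hy.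
  by rewrite ltn_neqAle ki andbT; apply: contra ie => /eqP ki'; apply/eqP/val_inj.
have yE : y = (fun i => y' i + s * ev i).
  apply/funext => i; rewrite /y' /ev /s; case: eqP => [->|_]; first by rewrite add0r mulr1.
  by rewrite mulr0 addr0.
have -> : \sum_i (if i == e then c else lam i) * y i = l y' + c * s.
  rewrite /l -(@sum_ind _ _ e (c * s)) -big_split /=; apply: eq_bigr => i _.
  by rewrite /y' /s; case: eqP => [->|]; rewrite ?mulr0 ?add0r ?addr0.
have [s0|s0|s0] := ltgtP s 0.
- have r0 : 0 < - s by rewrite oppr_gt0.
  have := gec (fun i => (- s)^-1 * y' i) (ZZ _ _ Zy').
  rewrite lZ.
  have -> : (fun i => (- s)^-1 * y' i - ev i) = (fun i => (- s)^-1 * y i).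
    by apply/funext => i; rewrite yE /=; field; rewrite ltr0_neq0.
  rewrite Phom ?invr_gt0 // -mulrBr => h.
  have := ler_wpM2l (ltW r0) h; rewrite mulrA mulfV ?mul1r; last by rewrite gt_eqF.
  move=> h'; lra.
- have := cle (fun i => s^-1 * y' i) (ZZ _ _ Zy').
  rewrite lZ.
  have -> : (fun i => s^-1 * y' i + ev i) = (fun i => s^-1 * y i).
    by apply/funext => i; rewrite yE /=; field; rewrite lt0r_neq0.
  rewrite Phom ?invr_gt0 // -mulrBr => h.
  have := ler_wpM2l (ltW s0) h; rewrite mulrA mulfV ?mul1r; last by rewrite gt_eqF.
  move=> h'; lra.
- rewrite s0 mulr0 addr0; have -> : y = y'.
    by rewrite {1}yE s0; apply/funext => i; rewrite mul0r addr0.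
  exact: IH.
Qed.
Section Gordan.
Variables (R : realType) (N : nat) (A : pred 'I_N.+1) (A0 : A ord0).
Definition Mx (z : 'I_N.+1 -> R) : R := z (Order.arg_max ord0 A z).
Lemma Mx_ge z {i} : A i -> z i <= Mx z.
Proof. by rewrite /Mx; case: (arg_maxP z A0) => j Aj H /H. Qed.
Lemma Mx_att z : exists2 i, A i & Mx z = z i.
Proof. by rewrite /Mx; case: (arg_maxP z A0) => j Aj H; exists j. Qed.
Lemma Mx_le z b : (forall i, A i -> z i <= b) -> Mx z <= b.
Proof. by move=> H; have [i Ai ->] := Mx_att z; exact: H. Qed.
Lemma Mx_mono z z' : (forall i, A i -> z i <= z' i) -> Mx z <= Mx z'.
Proof. by move=> H; apply: Mx_le => i Ai; exact: (le_trans (H _ Ai) (Mx_ge z' Ai)). Qed.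
Lemma Mx_add z z' : Mx (fun i => z i + z' i) <= Mx z + Mx z'.
Proof. by apply: Mx_le => i Ai; apply: lerD; exact: Mx_ge. Qed.
Lemma Mx_hom a z : 0 < a -> Mx (fun i => a * z i) = a * Mx z.
Proof.
move=> a0; apply/eqP; rewrite eq_le; apply/andP; split.
  by apply: Mx_le => i Ai; rewrite ler_pM2l //; exact: Mx_ge.
have [i Ai ->] := Mx_att z; exact: (Mx_ge (fun i => a * z i) Ai).
Qed.

Variable (E : lmodType R) (p : 'I_N.+1 -> E -> R).
Hypotheses (psub : forall i u v, p i (u + v) <= p i u + p i v)
  (phom : forall i c u, 0 < c -> p i (c *: u) = c * p i u)
  (pinf : forall u, exists2 i, A i & 0 <= p i u).

Lemma p0 i : p i 0 = 0.
Proof. by have := phom i 2 0 (ltr0Sn _ 1); rewrite scaler0 => h; lra. Qed.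

Let S y := [set Mx (fun i => y i + p i u) | u in [set: E]].
Let P y := inf (S y).
Let Slb y : has_lbound (S y).
Proof.
exists (- \sum_j `|y j|) => _ [u _ <-].
have [i Ai pi] := pinf u.
apply: le_trans (Mx_ge _ Ai).
have : `|y i| <= \sum_j `|y j|.
  by rewrite (bigD1 i) //= lerDl sumr_ge0.
have := ler_normr (y i); have := ler_norm (- y i); rewrite normrN => h1 h2 h3.
lra.
Qed.
Let Ple y u : P y <= Mx (fun i => y i + p i u).
Proof. by apply: ge_inf; [exact: Slb | exists u]. Qed.
Let Pge y b : (forall u, b <= Mx (fun i => y i + p i u)) -> b <= P y.
Proof. by move=> H; apply: lb_le_inf; [exists (Mx (fun i => y i + p i 0)); exists 0 | move=> _ [u _ <-]]. Qed.

Lemma sum_ind2 (F : 'I_N.+1 -> R) j a :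
  \sum_i F i * (if i == j then a else 0) = F j * a.
Proof. by rewrite (bigD1 j) //= eqxx big1 ?addr0 // => i /negPf ->; rewrite mulr0. Qed.

Lemma gordan : exists lam : 'I_N.+1 -> R,
  (forall i, 0 <= lam i) /\ (forall i, ~~ A i -> lam i = 0) /\
  (exists i, lam i != 0) /\ (forall u, 0 <= \sum_i lam i * p i u).
Proof.
have [lam Hl] : exists lam : 'I_N.+1 -> R, forall y, \sum_i lam i * y i <= P y.
  apply: hb_fin.
  - move=> y z; rewrite -lerBlDr; apply: Pge => v; rewrite lerBlDr -lerBlDl.
    apply: Pge => u; rewrite lerBlDl.
    apply: le_trans (Ple _ (u + v)) _.
    apply: le_trans _ (Mx_add (fun i => y i + p i v) (fun i => z i + p i u)).
    apply: Mx_mono => i _; have := psub i u v; lra.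
  - move=> c y c0; apply/eqP; rewrite eq_le; apply/andP; split.
      rewrite -ler_pdivrMl //; apply: Pge => u.
      rewrite ler_pdivrMl //; apply: le_trans (Ple _ (c *: u)) _.
      rewrite -Mx_hom //; apply: Mx_mono => i _; rewrite phom // mulrDr.
      by [].
    apply: Pge => u.

    apply: le_trans (ler_wpM2l (ltW c0) (Ple y (c^-1 *: u))) _.
    rewrite -Mx_hom //; apply: Mx_mono => i _; rewrite phom ?invr_gt0 //.
    by rewrite mulrDr mulrA mulfV ?mul1r // gt_eqF.
  - apply: Pge => u; have [i Ai pi] := pinf u; apply: le_trans (Mx_ge _ Ai).
    by rewrite add0r.
have lam_ge0 i : 0 <= lam i.
  have := Hl (fun j => if j == i then -1 else 0); rewrite sum_ind2 => h.
  have : P (fun j => if j == i then -1 else 0) <= 0.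
    apply: le_trans (Ple _ 0) _; apply: Mx_le => j _; rewrite p0 addr0.
    by case: ifP.
  lra.
exists lam; split => //; split.
  move=> j Aj; apply/eqP; rewrite eq_le lam_ge0 andbT.
  have := Hl (fun i => if i == j then 1 else 0); rewrite sum_ind2 mulr1 => h.
  apply: le_trans h _; apply: le_trans (Ple _ 0) _; apply: Mx_le => i Ai.
  rewrite p0 addr0; case: eqP => // ij; by move: Aj; rewrite -ij Ai.
split.
  have h1 : \sum_i lam i * -1 <= P (fun=> -1) := Hl (fun=> -1).
  have h2 : P (fun=> -1) <= -1 by apply: le_trans (Ple _ 0) _; apply: Mx_le => i _; rewrite p0 addr0.
  case: (pselect (exists i, lam i != 0)) => // H.
  rewrite (_ : \sum_i lam i * -1 = 0) in h1.
    lra.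
    apply: big1 => i _; suff -> : lam i = 0 by rewrite mul0r.
    by apply/eqP; apply/negPn/negP => hi; apply: H; exists i.
move=> u; have := Hl (fun i => - p i u).
have : P (fun i => - p i u) <= 0.
  by apply: le_trans (Ple _ u) _; apply: Mx_le => i _; rewrite addNr.
have -> : \sum_i lam i * - p i u = - \sum_i lam i * p i u.
  by rewrite -sumrN; apply: eq_bigr => i _; rewrite mulrN.
lra.
Qed.
End Gordan.
Lemma at_right_scale (R : realType) (c : R) (V : set R) : 0 < c ->
  (0:R)^'+ V -> (0:R)^'+ [set t | V (c * t)].
Proof.
move=> c0 [e /= e0 He].
exists (e / c) => /=; first by rewrite divr_gt0.
move=> t /= h t0; apply: He => /=; last by rewrite mulr_gt0.
rewrite sub0r normrN in h; rewrite sub0r normrN normrM gtr0_norm //.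
by rewrite -ltr_pdivlMl // mulrC.
Qed.
Lemma limf_esup_scale (R : realType) (h : R -> R) (c : R) : 0 < c ->
  limf_esup (fun t => (c * h (c * t))%:E) (0:R)^'+ =
  (c%:E * limf_esup (fun t => (h t)%:E) (0:R)^'+)%E.
Proof.
move=> c0; rewrite /limf_esup -ereal_inf_pZl //; congr ereal_inf.
apply/seteqP; split.
- move=> _ [V FV <-]; exists (ereal_sup ((fun t => (h t)%:E) @` [set c * t | t in V])).
    exists [set c * t | t in V] => //.
    have ci : 0 < c^-1 by rewrite invr_gt0.
    apply: filterS (@at_right_scale _ _ _ ci FV) => s /= Vs.
    by exists (c^-1 * s) => //; rewrite mulrA mulfV ?mul1r // gt_eqF.
  rewrite -ereal_sup_pZl //; congr ereal_sup; apply/seteqP; split.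
    by move=> _ [_ [_ [t Vt <-] <-] <-]; exists t => //; rewrite EFinM.
  move=> _ [t Vt <-]; exists (h (c * t))%:E; last by rewrite EFinM.
  by exists (c * t) => //; exists t.
- move=> _ [_ [W FW <-] <-]; exists [set t | W (c * t)]; first exact: at_right_scale.
  rewrite -ereal_sup_pZl //; congr ereal_sup; apply/seteqP; split.
    move=> _ [t Wt <-]; exists (h (c * t))%:E; last by rewrite EFinM.
    by exists (c * t).
  move=> _ [_ [s Ws <-] <-]; exists (c^-1 * s) => /=.
    by rewrite mulrA mulfV ?mul1r // gt_eqF.
  by rewrite mulrA mulfV ?mul1r ?EFinM // gt_eqF.
Qed.
Lemma cont_line (R : realType) (E : topologicalLmodType R) (x u : E) :
  (fun t : R => x + t *: u) @ (0:R)^'+ --> x.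
Proof.
have h0 : (fun t : R => (t : R^o)) @ (0:R)^'+ --> (0:R^o).
  apply: cvg_within_filter. exact: cvg_id.
have h1 : (fun t : R => (t : R^o) *: u) @ (0:R)^'+ --> (0:R^o) *: u.
  apply: (@continuous2_cvg _ _ _ _ _ _ (fun t : R => (t : R^o)) (fun=> u) (fun (a : R^o) (b : E) => a *: b)).
  - exact: (@scale_continuous _ _ ((0:R^o), u)).
  - exact: h0.
  - exact: cvg_cst.
rewrite scale0r in h1.
have := @continuous2_cvg _ _ _ _ _ _ (fun=> x) (fun t : R => (t : R^o) *: u) (fun a b : E => a + b) x 0 (@add_continuous _ (x, 0)) (cvg_cst _) h1.
by rewrite addr0; apply; apply: filter_class.
Qed.

Section DiniFacts.
Variables (R : realType) (E : topologicalLmodType R) (f : E -> R) (x : E).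

Lemma dini_up0 : dini_up f x 0 = 0%E.
Proof. by rewrite /dini_up eqxx. Qed.

Lemma dini_upZ c u : 0 < c -> dini_up f x (c *: u) = (c%:E * dini_up f x u)%E.
Proof.
move=> c0; rewrite /dini_up; case: (eqVneq u 0) => [->|u0].
  by rewrite scaler0 eqxx mule0.
rewrite scaler_eq0 (negbTE u0) gt_eqF //=.
rewrite -(@limf_esup_scale _ _ _ c0); congr limf_esup; apply/funext => t /=.
congr EFin; rewrite scalerA (mulrC t c).
have [->|t0] := eqVneq t 0; first by rewrite !mulr0 invr0 !mulr0.
by field; rewrite t0 gt_eqF.
Qed.

Lemma dini_up_lt0 u : (dini_up f x u < 0)%E ->
  \forall t \near (0:R)^'+, f (x + t *: u) < f x.
Proof.
rewrite /dini_up; case: eqP => [_|u0]; first by rewrite ltxx.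
move/ereal_inf_lt => [_ [V FV <-]] hV.
near=> t.
have Vt : V t by near: t.
have tpos : 0 < t by near: t; exact: nbhs_right_gt.
have := @ereal_sup_ubound _ [set ((f (x + t *: u) - f x) / t)%:E | t in V] _ (ex_intro2 _ _ t Vt erefl).
move=> /le_lt_trans /(_ hV); rewrite lte_fin => h.
by move: h; rewrite pmulr_llt0 ?invr_gt0 // subr_lt0.
Unshelve. all: by end_near.
Qed.

Hypothesis Hd : dini_upM_differentiable f x.
Definition dd u := fine (dini_up f x u).
Definition pM u := fine (dini_upM f x u).
Lemma ddE u : dini_up f x u = (dd u)%:E.
Proof. by rewrite /dd fineK //; case: (Hd u). Qed.
Lemma pME u : dini_upM f x u = (pM u)%:E.
Proof. by rewrite /pM fineK //; case: (Hd u). Qed.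
Lemma dd0 : dd 0 = 0.
Proof. by rewrite /dd dini_up0. Qed.
Lemma ddZ c u : 0 < c -> dd (c *: u) = c * dd u.
Proof. by move=> c0; rewrite {1}/dd dini_upZ // ddE -EFinM. Qed.
Lemma pM_ge u w : dd (u + w) - dd w <= pM u.
Proof.
have := @ereal_sup_ubound _ [set (dini_up f x (u + w)%R - dini_up f x w)%E | w in [set: E]] _ (ex_intro2 _ _ w I erefl).
by rewrite -/(dini_upM f x u) pME !ddE -EFinB lee_fin.
Qed.
Lemma pM_le u b : (forall w, dd (u + w) - dd w <= b) -> pM u <= b.
Proof.
move=> H; rewrite -lee_fin -pME; apply: ge_ereal_sup => _ [w _ <-].
by rewrite !ddE -EFinB lee_fin.
Qed.
Lemma dd_le_pM u : dd u <= pM u.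
Proof. by have := pM_ge u 0; rewrite addr0 dd0 subr0. Qed.
Lemma pM_sub u v : pM (u + v) <= pM u + pM v.
Proof.
apply: pM_le => w; have := pM_ge u (v + w); have := pM_ge v w; rewrite addrA; lra.
Qed.
Lemma pM_le_hom c u : 0 < c -> pM (c *: u) <= c * pM u.
Proof.
move=> c0; apply: pM_le => w; have := pM_ge u (c^-1 *: w).
have ci : 0 < c^-1 by rewrite invr_gt0.
have e1 : c *: u + w = c *: (u + c^-1 *: w) by rewrite scalerDr scalerA mulfV ?scale1r // gt_eqF.
have e2 : w = c *: (c^-1 *: w) by rewrite scalerA mulfV ?scale1r // gt_eqF.
rewrite e1 ddZ // [in dd w]e2 ddZ // -mulrBr => h.
by rewrite ler_pM2l.
Qed.
Lemma pM_hom c u : 0 < c -> pM (c *: u) = c * pM u.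
Proof.
move=> c0; apply/eqP; rewrite eq_le pM_le_hom //=.
have ci : 0 < c^-1 by rewrite invr_gt0.
have := @pM_le_hom c^-1 (c *: u) ci; rewrite scalerA mulVf ?scale1r ?gt_eqF // => h.
by have := ler_wpM2l (ltW c0) h; rewrite mulrA mulfV ?mul1r // gt_eqF.
Qed.
Lemma pM_lt0 u : pM u < 0 -> \forall t \near (0:R)^'+, f (x + t *: u) < f x.
Proof.
move=> h; apply: dini_up_lt0; rewrite ddE lte_fin; exact: le_lt_trans (dd_le_pM u) h.
Qed.
End DiniFacts.

Lemma sum_conv (R : realType) (E : topologicalLmodType R) m (f : 'I_m.+1 -> E -> R) xh
  (Hd : forall i : 'I_m.+1, dini_upM_differentiable (f i) xh) (lam : 'I_m.+1 -> R) u :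
  (\sum_(i < m.+1) (lam i)%:E * dini_upM (f i) xh u)%E =
  (\sum_(i < m.+1) lam i * pM _ _ (f i) xh u)%:E.
Proof.
rewrite -sumEFin; apply: eq_bigr => i _; by rewrite (pME _ _ _ _ (Hd i)) EFinM.
Qed.

Theorem theorem3p1 (R : realType) (E : topologicalLmodType R) (Omega : set E)
    (m : nat) (f : 'I_m.+1 -> E -> R) (xh : E) :
  open Omega -> Omega !=set0 ->
  (* xh solves (Q1) *)
  Omega xh -> (forall i : 'I_m.+1, i != ord0 -> f i xh <= 0) ->
  (forall x, Omega x -> (forall i : 'I_m.+1, i != ord0 -> f i x <= 0) ->
     f ord0 xh <= f ord0 x) ->
  (* (a) *)
  (forall j : 'I_m.+1, j != ord0 -> f j xh < 0 -> usc_at (f j) xh) ->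
  (* (b) *)
  (forall i : 'I_m.+1, dini_upM_differentiable (f i) xh) ->
  (exists lam : 'I_m.+1 -> R,
      (forall i, 0 <= lam i) /\
      (exists i, lam i != 0) /\
      (forall i : 'I_m.+1, i != ord0 -> lam i * f i xh = 0) /\
      (forall u : E, (0 <= \sum_(i < m.+1) (lam i)%:E * dini_upM (f i) xh u)%E))
  /\
  ((* (c) *)
   (exists w : E, forall i : 'I_m.+1, i != ord0 -> f i xh = 0 ->
       (dini_upM (f i) xh w < 0)%E) ->
   exists lam : 'I_m.+1 -> R,
      (forall i, 0 <= lam i) /\
      lam ord0 = 1 /\
      (forall i : 'I_m.+1, i != ord0 -> lam i * f i xh = 0) /\
      (forall u : E, (0 <= \sum_(i < m.+1) (lam i)%:E * dini_upM (f i) xh u)%E)).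
Proof.
move=> oO _ Ox Hfe Hmin Husc Hd.
pose A : pred 'I_m.+1 := fun i => (i == ord0) || (f i xh == 0).
have A0 : A ord0 by rewrite /A eqxx.
pose p i u := pM _ _ (f i) xh u.
have psub i u v : p i (u + v) <= p i u + p i v by exact: (pM_sub _ _ _ _ (Hd i)).
have phom i c u : 0 < c -> p i (c *: u) = c * p i u by move=> c0; exact: (pM_hom _ _ _ _ (Hd i)).
have pinf u : exists2 i, A i & 0 <= p i u.
  case: (pselect (exists2 i, A i & 0 <= p i u)) => // H; exfalso.
  have Hn i : A i -> p i u < 0.
    by move=> Ai; rewrite ltNge; apply/negP => h; apply: H; exists i.
  have hO : \forall t \near (0:R)^'+, Omega (xh + t *: u).
    apply: (cont_line _ _ xh u); apply: open_nbhs_nbhs; split => //.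
  have h0 : \forall t \near (0:R)^'+, f ord0 (xh + t *: u) < f ord0 xh.
    exact: (pM_lt0 _ _ _ _ (Hd ord0) _ (Hn _ A0)).
  have hi : \forall t \near (0:R)^'+, forall i, i != ord0 -> f i (xh + t *: u) <= 0.
    apply: filter_forall => i.
    case: (eqVneq i ord0) => [->|ni]; first by apply: nearW.
    have := Hfe i ni; rewrite le_eqVlt; case/orP => [/eqP fi0|fi0].
      have Ai : A i by rewrite /A fi0 eqxx orbT.
      apply: filterS (pM_lt0 _ _ _ _ (Hd i) _ (Hn _ Ai)) => t ht _.
      by rewrite -fi0 ltW.
    have := Husc i ni fi0 (- f i xh); rewrite oppr_gt0 => /(_ fi0) hu.
    have hh : \forall t \near (0:R)^'+, f i (xh + t *: u) < f i xh - f i xh.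
      exact: (cont_line _ _ xh u _ hu).
    apply: filterS hh => t /= ht _.
    by rewrite ltW // -(addrN (f i xh)).
  have : \forall t \near (0:R)^'+, False.
    near=> t.
    have O1 : Omega (xh + t *: u) by near: t.
    have F1 : forall i, i != ord0 -> f i (xh + t *: u) <= 0 by near: t.
    have L1 : f ord0 (xh + t *: u) < f ord0 xh by near: t.
    by have := Hmin _ O1 F1; rewrite leNgt L1.
  by move/filter_ex => [].
have [lam [l0 [lA [lnz lsum]]]] := @gordan _ _ A A0 _ p psub phom pinf.
have slack i : i != ord0 -> lam i * f i xh = 0.
  move=> ni; case: (eqVneq (f i xh) 0) => [->|fn]; first by rewrite mulr0.
  by rewrite lA ?mul0r // /A negb_or ni fn.
split.
  exists lam; split => //; split => //; split => // u.
  by rewrite (sum_conv _ _ _ _ _ Hd) lee_fin; exact: lsum.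
move=> [w Hw].
have l0pos : lam ord0 != 0.
  apply/negP => /eqP l00.
  have [j lj] := lnz.
  have Aj : A j by apply: contraNT lj => /lA ->.
  have nj : j != ord0 by apply: contraNneq lj => ->; rewrite l00.
  have fj : f j xh = 0 by move: Aj; rewrite /A (negbTE nj) /= => /eqP.
  have pneg i : i != ord0 -> f i xh = 0 -> p i w < 0.
    by move=> ni fi; have := Hw i ni fi; rewrite /p (pME _ _ _ _ (Hd i)) lte_fin.
  have hle i : lam i * p i w <= 0.
    case: (eqVneq (lam i) 0) => [->|li]; first by rewrite mul0r.
    have Ai : A i by apply: contraNT li => /lA ->.
    have ni : i != ord0 by apply: contraNneq li => ->; rewrite l00.
    have fi : f i xh = 0 by move: Ai; rewrite /A (negbTE ni) /= => /eqP.
    by rewrite mulr_ge0_le0 // ltW // pneg.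
  have hj : lam j * p j w < 0.
    by rewrite pmulr_rlt0 ?pneg // lt0r lj l0.
  have := lsum w; rewrite (bigD1 j) //=.
  have := @sumr_le0 _ _ (index_enum 'I_m.+1) (fun i => i != j) (fun i => lam i * p i w) (fun i _ => hle i).
  lra.
have l0p : 0 < lam ord0 by rewrite lt0r l0pos l0.
exists (fun i => lam i / lam ord0); split.
  by move=> i; rewrite divr_ge0.
split; first by rewrite mulfV.
split.
  by move=> i ni; rewrite mulrAC slack // mul0r.
move=> u; rewrite (sum_conv _ _ _ _ _ Hd) lee_fin.
have -> : \sum_(i < m.+1) lam i / lam ord0 * pM _ _ (f i) xh u =
          (lam ord0)^-1 * \sum_(i < m.+1) lam i * p i u.
  by rewrite mulr_sumr; apply: eq_bigr => i _; rewrite mulrAC mulrC.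
by rewrite mulr_ge0 // ?invr_ge0 ?ltW // lsum.
Unshelve. all: by end_near.
Qed.
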